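(* Let $\Gamma\vdash t:A$ be derivable in the simply typed distributive $\lambda$-calculus. Then: (1) if $t=x$, then $\Gamma=\Gamma',x:B$ for some $\Gamma'$ and $B$ with $B\equiv A$; (2) if $t=\lambda x.s$, then $\Gamma,x:B\vdash s:C$ for some $B,C$ with $B\Rightarrow C\equiv A$; (3) if $t=\langle s_1,s_2\rangle$, then $\Gamma\vdash s_i:B_i$ for $i=1,2$, for some $B_1,B_2$ with $B_1\wedge B_2\equiv A$; (4) if $t=su$, then for some $B$, $\Gamma\vdash s:B\Rightarrow A$ and $\Gamma\vdash u:B$; (5) if $t=\pi_i s$, then $\Gamma\vdash s:B_1\wedge B_2$ for some $B_1,B_2$ with $B_i=A$.
   Context: Terms: $t,s,u ::= x \mid \lambda x.t \mid ts \mid \langle t,s\rangle \mid \pi_1 t \mid \pi_2 t$ (up to $\alpha$-renaming). Types: $A ::= \tau \mid A\Rightarrow A \mid A\wedge A$ with $\tau$ a single atomic type; $A\Rightarrow B\wedge C$ means $A\Rightarrow(B\wedge C)$. The relation $\equiv$ on types is the smallest equivalence relation (reflexive, symmetric, transitive) that contains $A\Rightarrow (B\wedge C)\equiv (A\Rightarrow B)\wedge(A\Rightarrow C)$ for all $A,B,C$, and is a congruence: $A\equiv C$ implies $A\Rightarrow B\equiv C\Rightarrow B$ and $A\wedge B\equiv C\wedge B$; $B\equiv C$ implies $A\Rightarrow B\equiv A\Rightarrow C$ and $A\wedge B\equiv A\wedge C$. Typing contexts $\Gamma$ are finite assignments of types to variables. Typing rules: $\Gamma,x:A\vdash x:A$;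 if $\Gamma\vdash t:A$ and $A\equiv B$ then $\Gamma\vdash t:B$; if $\Gamma,x:A\vdash t:B$ then $\Gamma\vdash \lambda x.t:A\Rightarrow B$; if $\Gamma\vdash t:A\Rightarrow B$ and $\Gamma\vdash s:A$ then $\Gamma\vdash ts:B$; if $\Gamma\vdash t:A$ and $\Gamma\vdash s:B$ then $\Gamma\vdash\langle t,s\rangle:A\wedge B$; if $\Gamma\vdash t:A\wedge B$ then $\Gamma\vdash\pi_1 t:A$ and $\Gamma\vdash \pi_2 t:B$. *)

(* Defs.v *)
(* Terms are in de Bruijn form (terms up to alpha-renaming); a typing
   context is a finite list of types, the variable with index n having
   type nth_error Gamma n, and "Gamma, x:A" is A :: Gamma. *)
From Stdlib Require Import List.
Import ListNotations.

Inductive term : Type :=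
  | Var : nat -> term
  | Lam : term -> term
  | App : term -> term -> term
  | Pair : term -> term -> term
  | Proj1 : term -> term
  | Proj2 : term -> term.

Inductive typ : Type :=
  | Tau : typ
  | Arr : typ -> typ -> typ
  | Conj : typ -> typ -> typ.

Inductive teq : typ -> typ -> Prop :=
  | teq_refl : forall A, teq A A
  | teq_sym : forall A B, teq A B -> teq B A
  | teq_trans : forall A B C, teq A B -> teq B C -> teq A C
  | teq_distr : forall A B C, teq (Arr A (Conj B C)) (Conj (Arr A B) (Arr A C))
  | teq_arr_l : forall A B C, teq A C -> teq (Arr A B) (Arr C B)
  | teq_conj_l : forall A B C, teq A C -> teq (Conj A B) (Conj C B)
  | teq_arr_r : forall A B C, teq B C -> teq (Arr A B) (Arr A C)
  | teq_conj_r : forall A B C, teq B C -> teq (Conj A B) (Conj A C).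

Definition ctx := list typ.

Inductive typing : ctx -> term -> typ -> Prop :=
  | ty_var : forall G n A, nth_error G n = Some A -> typing G (Var n) A
  | ty_equiv : forall G t A B, typing G t A -> teq A B -> typing G t B
  | ty_lam : forall G t A B, typing (A :: G) t B -> typing G (Lam t) (Arr A B)
  | ty_app : forall G t s A B, typing G t (Arr A B) -> typing G s A -> typing G (App t s) B
  | ty_pair : forall G t s A B, typing G t A -> typing G s B -> typing G (Pair t s) (Conj A B)
  | ty_proj1 : forall G t A B, typing G t (Conj A B) -> typing G (Proj1 t) A
  | ty_proj2 : forall G t A B, typing G t (Conj A B) -> typing G (Proj2 t) B.

(* Main.v *)
Require Import Defs.
From Stdlib Require Import List.

Theorem lemma2 :
  (forall G n A, typing G (Var n) A ->
     exists B, nth_error G n = Some B /\ teq B A) /\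
  (forall G s A, typing G (Lam s) A ->
     exists B C, typing (B :: G) s C /\ teq (Arr B C) A) /\
  (forall G s1 s2 A, typing G (Pair s1 s2) A ->
     exists B1 B2, typing G s1 B1 /\ typing G s2 B2 /\ teq (Conj B1 B2) A) /\
  (forall G s u A, typing G (App s u) A ->
     exists B, typing G s (Arr B A) /\ typing G u B) /\
  (forall G s A, typing G (Proj1 s) A ->
     exists B1 B2, typing G s (Conj B1 B2) /\ B1 = A) /\
  (forall G s A, typing G (Proj2 s) A ->
     exists B1 B2, typing G s (Conj B1 B2) /\ B2 = A).
Proof.
  repeat split.
  - intros G n A H. remember (Var n) as t eqn:E. revert n E.
    induction H; intros; try discriminate.
    + injection E as ->. eauto using teq_refl.
    + destruct (IHtyping _ E) as [B' [? ?]]. eauto using teq_trans.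
  - intros G s A H. remember (Lam s) as t eqn:E. revert s E.
    induction H; intros; try discriminate.
    + destruct (IHtyping _ E) as [B' [C' [? ?]]]. eauto 6 using teq_trans.
    + injection E as ->. eauto 6 using teq_refl.
  - intros G s1 s2 A H. remember (Pair s1 s2) as t eqn:E. revert s1 s2 E.
    induction H; intros; try discriminate.
    + destruct (IHtyping _ _ E) as [B1 [B2 [? [? ?]]]]. eauto 8 using teq_trans.
    + injection E as -> ->. eauto 8 using teq_refl.
  - intros G s u A H. remember (App s u) as t eqn:E. revert s u E.
    induction H; intros; try discriminate.
    + destruct (IHtyping _ _ E) as [B' [? ?]]. exists B'. split; auto.
      eapply ty_equiv; [eassumption|]. apply teq_arr_r; assumption.
    + injection E as -> ->. eauto.
  - intros G s A H. remember (Proj1 s) as t eqn:E. revert s E.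
    induction H; intros; try discriminate.
    + destruct (IHtyping _ E) as [B1 [B2 [? ?]]]. subst. exists B, B2. split; auto.
      eapply ty_equiv; [eassumption|]. apply teq_conj_l; assumption.
    + injection E as ->. eauto.
  - intros G s A H. remember (Proj2 s) as t eqn:E. revert s E.
    induction H; intros; try discriminate.
    + destruct (IHtyping _ E) as [B1 [B2 [? ?]]]. subst. exists B1, B. split; auto.
      eapply ty_equiv; [eassumption|]. apply teq_conj_r; assumption.
    + injection E as ->. eauto.
Qed.
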